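(* For any space $X$ and $x\in X$, the following are equivalent: (1) $X$ is sequentially $0$-connected at $x$; (2) $X$ is path connected and $0$-tame at $x$; (3) $X$ is path connected and $\pi_0$-residual at $x$; (4) every sequence of (unbased) maps $\{f_{k}\}_{k\in\mathbb{N}}$, $f_k:S^0\to X$, that converges to $x$ is sequentially null-homotopic; (5) for every convergent sequence $x_k\to x$ in $X$, there exists a path $\alpha:I\to X$ such that $\alpha(1/k)=x_k$ for all $k$ and $\alpha(0)=x$.
   Context: All spaces Hausdorff; $I=[0,1]$, $S^0=\{-1,1\}$. $\mathbb{H}_0=\{0\}\cup\{1/m:m\in\mathbb{N}\}$ with basepoint $b_0=0$, and $\ell_m:S^0\to\mathbb{H}_0$ sends $-1\mapsto 0$, $1\mapsto 1/m$ (inclusion of the $m$-th copy of $S^0$ in the shrinking wedge). $[(\mathbb{H}_0,b_0),(X,x)]$ is the set of based homotopy classes; $\Theta_0:[(\mathbb{H}_0,b_0),(X,x)]\to\pi_0(X,x)^{\mathbb{N}}$, $[f]\mapsto([f\circ\ell_m])_m$. $X$ is sequentially $0$-connected at $x$ if $[(\mathbb{H}_0,b_0),(X,x)]$ is a singleton; $\pi_0$-residual at $x$ if $\Theta_0$ is injective; $\pi_0$-finitary at $x$ if every element of the image of $\Theta_0$ has all but finitely many coordinates equal to the path component of $x$; $0$-tame at $x$ if it is $\pi_0$-residual and $\pi_0$-finitary at $x$. A sequence of maps $\{f_k\}$ converges to $x$ if for every neighborhood $U$ of $x$, $\operatorname{Im}(f_k)\subseteq U$ for all but finitely many $k$; it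 is sequentially null-homotopic if there are free homotopies $H_k$ from $f_k$ to the constant map at $x$ such that $\{H_k\}$ converges to $x$. *)

(* Defs.v *)
From HB Require Import structures.
From mathcomp Require Import all_boot all_order all_algebra.
From mathcomp Require Import all_classical all_reals all_analysis.
From mathcomp Require Import Rstruct Rstruct_topology.
From Stdlib Require Import Rdefinitions.
Set Implicit Arguments. Unset Strict Implicit. Unset Printing Implicit Defensive.
Import Order.TTheory GRing.Theory Num.Theory.
Local Open Scope classical_set_scope.
Local Open Scope ring_scope.

Definition unitI : set R := `[0%R, 1%R]%classic.

Definition S0 : set R := [set t | t = (-1)%R \/ t = 1%R].

Definition H0 : set R := [set t | t = 0%R \/ exists m : nat, t = (m.+1%:R)^-1].

(* l_m : S^0 -> H_0, -1 |-> 0, 1 |-> 1/m   (here m >= 1) *)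
Definition ell (m : nat) : R -> R := fun t => (t + 1) / (2 * m%:R).

(* A map (A,a) -> (X,x) of a subspace A of R, represented by a function R -> X
   that is continuous on the subspace A. *)
Definition based_map (X : topologicalType) (A : set R) (a : R) (x : X) (f : R -> X) : Prop :=
  {within A, continuous f} /\ f a = x.

Definition based_htpy (X : topologicalType) (A : set R) (a : R) (x : X) (f g : R -> X) : Prop :=
  exists H : R * R -> X,
    {within unitI `*` A, continuous H} /\
    (forall s, A s -> H (0%R, s) = f s /\ H (1%R, s) = g s) /\
    (forall t, unitI t -> H (t, a) = x).

(* [(H0,0),(X,x)] is a singleton (it is always inhabited by the constant map) *)
Definition seq_0_connected (X : topologicalType) (x : X) : Prop :=
  forall f g, based_map H0 0%R x f -> based_map H0 0%R x g -> based_htpy H0 0%R x f g.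

(* Theta_0 [f] = ([f o l_m])_m, with [f o l_m] in pi_0(X,x) = [(S0,-1),(X,x)] *)
Definition pi0_residual (X : topologicalType) (x : X) : Prop :=
  forall f g, based_map H0 0%R x f -> based_map H0 0%R x g ->
    (forall m : nat, based_htpy S0 (-1)%R x (f \o ell m.+1) (g \o ell m.+1)) ->
    based_htpy H0 0%R x f g.

Definition pi0_finitary (X : topologicalType) (x : X) : Prop :=
  forall f, based_map H0 0%R x f ->
    exists N : nat, forall m : nat, leq N m ->
      based_htpy S0 (-1)%R x (f \o ell m.+1) (fun _ => x).

Definition tame0 (X : topologicalType) (x : X) : Prop :=
  pi0_residual x /\ pi0_finitary x.

Definition path_connected (X : topologicalType) : Prop :=
  forall y z : X, exists gamma : R -> X,
    {within unitI, continuous gamma} /\ gamma 0%R = y /\ gamma 1%R = z.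

Definition maps_converge_to (X : topologicalType) (T : Type) (A : set T)
    (f : nat -> T -> X) (x : X) : Prop :=
  forall U, nbhs x U -> \forall k \near \oo, f k @` A `<=` U.

Definition seq_null_homotopic (X : topologicalType) (f : nat -> R -> X) (x : X) : Prop :=
  exists H : nat -> R * R -> X,
    (forall k, {within unitI `*` S0, continuous (H k)}) /\
    (forall k s, S0 s -> H k (0%R, s) = f k s /\ H k (1%R, s) = x) /\
    maps_converge_to (unitI `*` S0) H x.

(* Main.v *)
Require Import Defs.
From HB Require Import structures.
From mathcomp Require Import all_boot all_order all_algebra.
From mathcomp Require Import all_classical all_reals all_analysis.
From mathcomp Require Import Rstruct Rstruct_topology.
From Stdlib Require Import Rdefinitions.
From mathcomp.algebra_tactics Require Import ring lra.
Import Order.TTheory GRing.Theory Num.Theory.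
Local Open Scope classical_set_scope.
Local Open Scope ring_scope.
Delimit Scope ring_scope with ring.

Lemma withinP {T : pseudoMetricType R} {Y : topologicalType} (A : set T) (f : T -> Y) :
  {within A, continuous f} <->
  forall a, A a -> forall U, nbhs (f a) U ->
    exists2 e : R, 0 < e & forall b, A b -> ball a e b -> U (f b).
Proof.
rewrite subspace_continuousP; split.
- move=> H a Aa U fU; have := H a Aa U fU.
  rewrite /= nbhs_simpl /within /= => /nbhs_ballP [e e0 He].
  exists e => // b Ab abe; exact: (He b abe Ab).
- move=> H a Aa U fU; have [e e0 He] := H a Aa U fU.
  rewrite /= nbhs_simpl /within /=; apply/nbhs_ballP; exists e => // b abe Ab.
  exact: He.
Qed.

Lemma ballR (a b e : R) : ball a e b <-> `|a - b| < e.
Proof. by rewrite /ball /=. Qed.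

Lemma ballRR (a b : R * R) e : ball a e b <-> `|a.1 - b.1| < e /\ `|a.2 - b.2| < e.
Proof. by case: a b => ? ? [? ?]; rewrite /ball /=. Qed.

Goal forall a b : R, a <= b -> a < b + 1.
move=> a b h; lra.
Qed.


Lemma within_comp {T1 T2 : pseudoMetricType R} {Y : topologicalType}
  (A : set T1) (B : set T2) (g : T1 -> T2) (h : T2 -> Y) :
  {within A, continuous g} -> (forall a, A a -> B (g a)) ->
  {within B, continuous h} -> {within A, continuous (h \o g)}.
Proof.
move=> /withinP cg AB /withinP ch; apply/withinP => a Aa U hU.
have [e1 e10 H1] := ch (g a) (AB a Aa) U hU.
have [e2 e20 H2] := cg a Aa (ball (g a) e1) (nbhsx_ballx _ _ e10).
exists e2 => // b Ab ab; apply: H1; [exact: AB | exact: H2].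
Qed.





Lemma IZR1 : (1%R : R) = GRing.one RbaseSymbolsImpl_R__canonical__GRing_PzSemiRing. Proof. reflexivity. Qed.
Lemma IZRm1 : ((-1)%R : R) = - GRing.one RbaseSymbolsImpl_R__canonical__GRing_PzSemiRing. Proof. reflexivity. Qed.
Lemma IZR0 : (0%R : R) = @Algebra.zero RbaseSymbolsImpl_R__canonical__Algebra_BaseAddUMagma. Proof. reflexivity. Qed.

Lemma IZR2 : (2%R : R) = 2%:R. Proof. reflexivity. Qed.

Lemma S0_iso s s' : S0 s -> S0 s' -> `|s - s'| < 1 -> s' = s.
Proof.
move=> [->|->] [->|->] //; rewrite ?IZR1 ?IZRm1 ltr_norml => /andP [h1 h2]; lra.
Qed.

Lemma cont_S0 {Y : topologicalType} (a b : R -> Y) :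
  {within unitI, continuous a} -> {within unitI, continuous b} ->
  {within unitI `*` S0, continuous (fun p : R * R => if 0 < p.2 then a p.1 else b p.1)}.
Proof.
move=> /withinP ca /withinP cb; apply/withinP => -[t s] [/= It S0s] U hU.
have [e e0 He] : exists2 e : R, 0 < e & forall t', unitI t' -> `|t - t'| < e ->
    U (if 0 < s then a t' else b t').
  case: (0 < s) in hU *.
    by have [e e0 He] := ca t It U hU; exists e => // t' It' h; apply: He => //; apply/ballR.
  by have [e e0 He] := cb t It U hU; exists e => // t' It' h; apply: He => //; apply/ballR.
exists (Order.min e 1); first by rewrite lt_min e0 ltr01.
move=> [t' s'] [/= It' Ss'] /ballRR [/= h1 h2].
move: h1 h2; rewrite !lt_min => /andP [h1 _] /andP [_ h2].
by rewrite (@S0_iso s s' S0s Ss' h2); apply: He.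
Qed.

Lemma ltVn (a b : nat) : (0 < a)%nat -> (0 < b)%nat ->
  ((a%:R : R)^-1 < (b%:R)^-1) = (b < a)%nat.
Proof. by move=> a0 b0; rewrite ltf_pV2 ?ltr_nat // qualifE /= ltr0n. Qed.

Lemma leVn (a b : nat) : (0 < a)%nat -> (0 < b)%nat ->
  ((a%:R : R)^-1 <= (b%:R)^-1) = (b <= a)%nat.
Proof. by move=> a0 b0; rewrite lef_pV2 ?ler_nat // qualifE /= ltr0n. Qed.

Lemma convV (j : nat) :
  2 * (j.+2%:R : R)^-1 <= (j.+1%:R)^-1 + (j.+3%:R)^-1.
Proof.
set a : R := j.+1%:R.
have a0 : 0 < a by rewrite ltr0n.
have -> : (j.+2%:R : R) = a + 1 by rewrite /a -natr1.
have -> : (j.+3%:R : R) = a + 2 by rewrite /a -[j.+3]addn2 natrD -[j.+1]addn1 natrD; ring.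
rewrite -subr_ge0.
have -> : a^-1 + (a + 2)^-1 - 2 * (a + 1)^-1 = 2 / (a * (a + 1) * (a + 2)).
  field; apply/and3P; split; rewrite ?lt0r_neq0 //; lra.
apply: divr_ge0; first lra.
apply: mulr_ge0; [apply: mulr_ge0|]; lra.
Qed.

Lemma H0_iso (k : nat) : exists2 e : R, 0 < e &
  forall b, H0 b -> `|(k.+1%:R)^-1 - b| < e -> b = (k.+1%:R)^-1.
Proof.
set r : R := (k.+1%:R)^-1; set q : R := (k.+2%:R)^-1.
have q0 : 0 < q by rewrite invr_gt0 ltr0n.
have qr : q < r by rewrite /q /r ltVn.
exists (r - q); first by rewrite subr_gt0.
move=> b [->|[m ->]] /=; rewrite ?IZR0 ltr_norml => /andP [h1 h2]; first lra.
case: (ltngtP m k) => [mk|km|->] //.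
- have b1 : (k%:R : R)^-1 <= (m.+1%:R)^-1 by rewrite leVn //; case: k mk {r q q0 qr h1 h2}.
  case: k mk b1 @r @q q0 qr h1 h2 => // j mj b1 r q q0 qr h1 h2.
  have := convV j; rewrite -/r -/q => cv.
  move: b1 cv h1 h2; set A := (j.+1%:R : R)^-1; set B := (m.+1%:R : R)^-1 => b1 cv h1 h2.
  lra.
- have : (m.+1%:R : R)^-1 <= q by rewrite /q leVn.
  move: h1 h2; set B := (m.+1%:R : R)^-1 => h1 h2; lra.
Qed.

Definition hseq {X : Type} (x : X) (v : nat -> X) (r : R) : X :=
  if r == 0 then x else v (Num.truncn (r^-1)).-1.

Lemma hseq0 {X : Type} (x : X) v : hseq x v 0 = x.
Proof. by rewrite /hseq eqxx. Qed.

Lemma hseqk {X : Type} (x : X) v k : hseq x v (k.+1%:R)^-1 = v k.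
Proof.
rewrite /hseq invr_eq0 pnatr_eq0 /= invrK.
by rewrite natrK.
Qed.

Lemma hseq_cont {X : topologicalType} (x : X) (v : nat -> X) :
  v @ \oo --> x -> based_map H0 0%R x (hseq x v).
Proof.
move=> hv; split; last by rewrite IZR0 hseq0.
apply/withinP => a [->|[k ->]] U.
- rewrite IZR0 hseq0 => hU.
  have [N _ HN] := hv U hU.
  exists (N.+1%:R)^-1; first by rewrite invr_gt0 ltr0n.
  move=> b [->|[m ->]]; first by rewrite IZR0 hseq0 => _; exact: nbhs_singleton.
  move/ballR; rewrite sub0r normrN ger0_norm ?invr_ge0 ?ler0n // ltVn // ltnS.
  by move=> Nm; rewrite hseqk; apply: HN; exact: ltnW.
- move=> hU; have [e e0 He] := H0_iso k; exists e => // b Hb /ballR /(He b Hb) ->.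
  exact: nbhs_singleton.
Qed.

Lemma tube {X : topologicalType} (x : X) (H : R * R -> X) :
  {within unitI `*` H0, continuous H} -> (forall t, unitI t -> H (t, 0%R) = x) ->
  forall U, nbhs x U -> \forall k \near \oo, forall t, unitI t -> U (H (t, (k.+1%:R)^-1)).
Proof.
move=> /withinP cH Hx U hU.
have cI : compact unitI by exact: segment_compact.
move/compact_near_coveringP/near_covering_withinP: cI => cov.
apply: (cov nat \oo (fun k t => U (H (t, (k.+1%:R)^-1)))) => t It.
have hU' : nbhs (H (t, 0%R)) U by rewrite Hx.
have [e e0 He] := cH (t, 0%R) (conj It (or_introl erefl)) U hU'.
have hk := near_infty_natSinv_lt (PosNum e0).
exists (ball t e, [set k | (k.+1%:R)^-1 < e]).
  by split; first exact: nbhsx_ballx.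
move=> [t' k] [/= tt' hk'] It'; apply: He.
  by split => //=; right; exists k.
apply/ballRR => /=; split; first by apply/ballR.
by rewrite IZR0 sub0r normrN ger0_norm // invr_ge0 ler0n.
Qed.

Lemma unitIP t : unitI t <-> 0 <= t <= 1.
Proof. by rewrite /unitI /= in_itv /= IZR0 IZR1. Qed.

Section Paste.
Variables (X : topologicalType) (x : X) (p : nat -> R -> X).
Hypothesis pc : forall k, {within unitI, continuous (p k)}.
Hypothesis p1 : forall k, p k 1 = x.

Definition rnd (s : R) : nat := Num.truncn (s + 2^-1).
Definition beta (s : R) : X := p (rnd s).-1 ((2 * `|s - (rnd s)%:R|)%ring).

Lemma lam_I (c : nat) s : `|s - c%:R| <= 2^-1 -> unitI ((2 * `|s - c%:R|)%ring).
Proof. by move=> h; apply/unitIP; rewrite mulr_ge0 ?normr_ge0 //=; lra. Qed.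

Lemma beta_eq (c : nat) s : c%:R <= s + 2^-1 < c.+1%:R ->
  beta s = p c.-1 ((2 * `|s - c%:R|)%ring).
Proof. by move=> h; rewrite /beta /rnd (Num.Theory.truncn_def h). Qed.

Lemma piece (c : nat) s0 U : `|s0 - c%:R| <= 2^-1 ->
  nbhs (p c.-1 ((2 * `|s0 - c%:R|)%ring)) U ->
  exists2 d : R, 0 < d & forall s, `|s - c%:R| <= 2^-1 -> `|s - s0| < d ->
    U (p c.-1 ((2 * `|s - c%:R|)%ring)).
Proof.
move=> h0 hU; have /withinP := pc c.-1.
move=> /(_ _ (@lam_I c s0 h0) U hU) [e e0 He].
exists (e / 2); first by lra.
move=> s hs ss0; apply: He; first exact: (@lam_I c s hs).
apply/ballR.
have := ler_dist_dist (s0 - c%:R) (s - c%:R).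
have -> : s0 - c%:R - (s - c%:R) = - (s - s0) by ring.
rewrite normrN => hd.
rewrite -mulrBr normrM ger0_norm; last lra.
move: hd ss0; set a := `| _ - _ |; lra.
Qed.

Lemma two_half : 2 * (2^-1 : R) = 1.
Proof. by rewrite mulfV // pnatr_eq0. Qed.

Lemma beta_cont s0 : 1 <= s0 -> forall U, nbhs (beta s0) U ->
  exists2 d : R, 0 < d & forall s, `|s - s0| < d -> U (beta s).
Proof.
move=> s01 U hU.
have h2 : 0 < (2^-1 : R) by rewrite invr_gt0 ltr0n.
set m := rnd s0.
have /andP [hm1 hm2] : m%:R <= s0 + 2^-1 < m.+1%:R by apply: Num.Theory.truncn_itv; lra.
have m1 : (0 < m)%nat by rewrite /m /rnd Num.Theory.truncn_gt0; lra.
have hs0m : `|s0 - m%:R| <= 2^-1 by rewrite ler_norml; apply/andP; split; lra.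
have beq0 : beta s0 = p m.-1 ((2 * `|s0 - m%:R|)%ring) by apply: (@beta_eq m s0); rewrite hm1 hm2.
case: (ltrP (m%:R) (s0 + 2^-1)) => [hlt | hge].
- rewrite beq0 in hU; have [d d0 Hd] := @piece m s0 U hs0m hU.
  exists (Order.min d (Order.min (s0 + 2^-1 - m%:R) (m.+1%:R - (s0 + 2^-1)))).
    by rewrite !lt_min d0 /= !subr_gt0 hlt hm2.
  move=> s; rewrite !lt_min => /and3P [h1 h3 h4].
  move: (h3) (h4) => /ltr_normlP [h5 h6] /ltr_normlP [h7 h8].
  have hb : m%:R <= s + 2^-1 < m.+1%:R by apply/andP; split; lra.
  rewrite (@beta_eq m s hb); apply: Hd => //; rewrite ler_norml; apply/andP; split; lra.
- have [c mc] : exists c, m = c.+1 by exists m.-1; rewrite prednK.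
  have hmc : (m%:R : R) = c%:R + 1 by rewrite mc -natr1.
  have m2 : (0 < c)%nat.
    by rewrite -(ltr_nat R); move: hm1 hge s01; rewrite hmc; lra.
  have px1 : p m.-1 ((2 * `|s0 - m%:R|)%ring) = x.
    rewrite (_ : s0 - m%:R = - 2^-1); last by lra.
    by rewrite normrN ger0_norm; [rewrite -(p1 m.-1); congr p; rewrite IZR1 mulfV // pnatr_eq0 | exact: ltW].
  have hsc : `|s0 - c%:R| <= 2^-1 by rewrite ler_norml; apply/andP; split; lra.
  have px2 : p c.-1 ((2 * `|s0 - c%:R|)%ring) = x.
    rewrite (_ : s0 - c%:R = 2^-1); last by lra.
    by rewrite ger0_norm; [rewrite -(p1 c.-1); congr p; rewrite IZR1 mulfV // pnatr_eq0 | exact: ltW].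
  rewrite beq0 px1 in hU.
  have hU1 : nbhs (p m.-1 ((2 * `|s0 - m%:R|)%ring)) U by rewrite px1.
  have hU2 : nbhs (p c.-1 ((2 * `|s0 - c%:R|)%ring)) U by rewrite px2.
  have [d1 d10 Hd1] := @piece m s0 U hs0m hU1.
  have [d2 d20 Hd2] := @piece c s0 U hsc hU2.
  exists (Order.min d1 (Order.min d2 (2^-1))); first by rewrite !lt_min d10 d20 h2.
  move=> s; rewrite !lt_min => /and3P [h1 h3 h4].
  move: (h4) => /ltr_normlP [h5 h6].
  case: (lerP s0 s) => hs.
  + have hb : m%:R <= s + 2^-1 < m.+1%:R by apply/andP; split; lra.
    rewrite (@beta_eq m s hb); apply: Hd1 => //; rewrite ler_norml; apply/andP; split; lra.
  + have hb : c%:R <= s + 2^-1 < c.+1%:R by rewrite -mc; apply/andP; split; lra.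
    rewrite (@beta_eq c s hb); apply: Hd2 => //; rewrite ler_norml; apply/andP; split; lra.
Qed.

Definition alph (r : R) : X := if r <= 0 then x else beta (r^-1).

Lemma alph0 : alph 0%R = x.
Proof. by rewrite /alph IZR0 lexx. Qed.

Lemma alphk k : alph ((k.+1%:R)^-1) = p k 0%R.
Proof.
rewrite /alph ifF; last by apply/negbTE; rewrite -ltNge invr_gt0 ltr0n.
rewrite invrK (@beta_eq k.+1); last first.
  have h2 : 0 < (2^-1 : R) by rewrite invr_gt0 ltr0n.
  have h3 : (2^-1 : R) < 1 by rewrite invf_lt1 ?ltr0n // ltr1n.
  by apply/andP; split; rewrite -?[k.+2%:R]natr1; lra.
by rewrite subrr normr0 mulr0 IZR0.
Qed.

Hypothesis hconv : forall U, nbhs x U -> \forall k \near \oo, forall t, unitI t -> U (p k t).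

Lemma alph_cont : {within unitI, continuous alph}.
Proof.
apply/withinP => r0 /unitIP /andP [r00 r01] U hU.
have h2 : 0 < (2^-1 : R) by rewrite invr_gt0 ltr0n.
case: (lerP r0 0) => hr0.
- rewrite /alph hr0 in hU.
  have [N _ HN] := hconv U hU.
  exists (N.+1%:R)^-1; first by rewrite invr_gt0 ltr0n.
  move=> r /unitIP /andP [r1 r2] /ballR hr; rewrite /alph; case: ifP => hr'.
    exact: nbhs_singleton.
  have rpos : 0 < r by rewrite ltNge hr'.
  have r00' : r0 = 0 by apply/eqP; rewrite eq_le hr0 r00.
  rewrite r00' sub0r normrN ger0_norm in hr; last exact: ltW.
  set s := r^-1.
  have hs : N.+1%:R < s.
    by rewrite /s -(invrK (N.+1%:R)) ltf_pV2 // qualifE /= ?invr_gt0 ?ltr0n.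
  set m := rnd s.
  have /andP [hm1 hm2] : m%:R <= s + 2^-1 < m.+1%:R.
    have s0 : 0 < s by rewrite /s invr_gt0.
    by apply: Num.Theory.truncn_itv; lra.
  rewrite (@beta_eq m s); last by rewrite hm1 hm2.
  apply: HN.
    have hNm : (N.+1 < m.+1)%nat by rewrite -(ltr_nat R); lra.
    by rewrite /=; move: hNm; case: (m) => [|m'] //=; rewrite !ltnS.
  by apply: lam_I; rewrite ler_norml; apply/andP; split; lra.
- have s01 : 1 <= r0^-1 by rewrite invf_ge1.
  have hU' : nbhs (beta r0^-1) U by move: hU; rewrite /alph ifF // ; apply/negbTE; rewrite -ltNge.
  have [d d0 Hd] := @beta_cont (r0^-1) s01 U hU'.
  have hinv := @inv_continuous _ r0 (lt0r_neq0 hr0) (ball (r0^-1) d) (nbhsx_ballx _ _ d0).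
  have [d1 d10 Hd1] := (nbhs_ballP _ _).1 hinv.
  exists (Order.min d1 r0); first by rewrite lt_min d10 hr0.
  move=> r Ir; rewrite ballR lt_min => /andP [h1 h3].
  have rpos : 0 < r by move: h3; rewrite ltr_norml => /andP [? ?]; lra.
  rewrite /alph ifF; last by apply/negbTE; rewrite -ltNge.
  apply: Hd; rewrite distrC; apply/ballR; apply: Hd1; exact/ballR.
Qed.
End Paste.
Definition phi (p : R * R) : R := ((1 - p.1) * (p.2 / (2 - p.2)) + p.1 * (p.2 / 2))%ring.

Lemma phi_cont (q : R * R) : q.2 != 2 -> {for q, continuous phi}.
Proof.
case: q => t s /= s2.
have cf : {for (t, s), continuous (fun p : R * R => p.1)} by exact: cvg_fst.
have cs : {for (t, s), continuous (fun p : R * R => p.2)} by exact: cvg_snd.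
have cc : forall c : R, {for (t, s), continuous (fun _ : R * R => c)} by move=> c; exact: cvg_cst.
have c1 : {for (t, s), continuous (fun p : R * R => 1 - p.1)}.
  exact: (@continuousB R R^o _ (fun _ => 1) (fun p : R * R => p.1) _ (cc 1) cf).
have c2 : {for (t, s), continuous (fun p : R * R => 2 - p.2)}.
  exact: (@continuousB R R^o _ (fun _ => 2) (fun p : R * R => p.2) _ (cc 2) cs).
have c3 : {for (t, s), continuous (fun p : R * R => (2 - p.2)^-1)}.
  apply: (@continuousV R _ (fun p : R * R => 2 - p.2) _ _ c2).
  by rewrite /= subr_eq0 eq_sym.
have c4 : {for (t, s), continuous (fun p : R * R => p.2 / (2 - p.2))}.
  exact: (@continuousM R _ (fun p : R * R => p.2) (fun p : R * R => (2 - p.2)^-1) _ cs c3).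
have c5 : {for (t, s), continuous (fun p : R * R => p.2 / 2)}.
  exact: (@continuousM R _ (fun p : R * R => p.2) (fun _ => 2^-1) _ cs (cc _)).
have c6 : {for (t, s), continuous (fun p : R * R => (1 - p.1) * (p.2 / (2 - p.2)))}.
  exact: (@continuousM R _ _ _ _ c1 c4).
have c7 : {for (t, s), continuous (fun p : R * R => p.1 * (p.2 / 2))}.
  exact: (@continuousM R _ _ _ _ cf c5).
exact: (@continuousD R R^o _ _ _ _ c6 c7).
Qed.

Lemma H0_I s : H0 s -> 0 <= s <= 1.
Proof.
case=> [->|[m ->]]; first by rewrite IZR0 lexx ler01.
by rewrite invr_ge0 ler0n /= invf_le1 ?ltr0n // ler1n.
Qed.

Lemma phi_I t s : unitI t -> 0 <= s <= 1 -> unitI (phi (t, s)).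
Proof.
move=> /unitIP /andP [t0 t1] /andP [s0 s1]; apply/unitIP; rewrite /phi /=.
have d0 : 0 < 2 - s by lra.
have a0 : 0 <= s / (2 - s) by apply: divr_ge0; lra.
have a1 : s / (2 - s) <= 1 by rewrite ler_pdivrMr // mul1r; lra.
have b0 : 0 <= s / 2 by apply: divr_ge0; lra.
have b1 : s / 2 <= 1 by rewrite ler_pdivrMr ?ltr0n // mul1r; lra.
have e1 : 0 <= (1 - t) * (s / (2 - s)) by apply: mulr_ge0; lra.
have e2 : (1 - t) * (s / (2 - s)) <= 1 - t by rewrite -[X in _ <= X]mulr1 ler_wpM2l //; lra.
have e3 : 0 <= t * (s / 2) by apply: mulr_ge0; lra.
have e4 : t * (s / 2) <= t by rewrite -[X in _ <= X]mulr1 ler_wpM2l //; lra.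
apply/andP; split; lra.
Qed.

Lemma phi_s0 t : phi (t, 0%R) = 0%R.
Proof. by rewrite /phi /= IZR0 !mul0r !mulr0 addr0. Qed.

Lemma phi_0k k : phi (0%R, (k.+1%:R)^-1) = ((k.*2).+1%:R)^-1.
Proof.
rewrite /phi /= IZR0 subr0 mul0r addr0 mul1r -!natr1 -muln2 natrM.
have k0 : 0 <= (k%:R : R) by exact: ler0n.
field; repeat (apply/andP; split); apply/lt0r_neq0; lra.
Qed.

Lemma phi_1k k : phi (1%R, (k.+1%:R)^-1) = ((k.*2).+2%:R)^-1.
Proof.
rewrite /phi /= IZR1 subrr mul0r add0r mul1r -!natr1 -muln2 natrM.
have k0 : 0 <= (k%:R : R) by exact: ler0n.
field; repeat (apply/andP; split); apply/lt0r_neq0; lra.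
Qed.

Arguments H0_I {s}.
Arguments phi_I {t s}.
Arguments within_comp {T1 T2 Y A B g h}.
Arguments S0_iso {s s'}.
Arguments hseq_cont {X x v}.
Arguments tube {X x H}.
Arguments H0_iso : clear implicits.

Lemma slice_cont {Y : topologicalType} (H : R * R -> Y) (A : set R) c :
  A c -> {within unitI `*` A, continuous H} -> {within unitI, continuous (fun t => H (t, c))}.
Proof.
move=> Ac /withinP cH; apply/withinP => t It U hU.
have [e e0 He] := cH (t, c) (conj It Ac) U hU.
exists e => // t' It' tt'; apply: He; first by split.
apply/ballRR => /=; split; first exact/ballR.
by rewrite subrr normr0.
Qed.



Definition P5 {X : topologicalType} (x : X) := forall u : nat -> X, u @ \oo --> x ->
          exists alpha : R -> X,
            {within unitI, continuous alpha} /\ alpha 0%R = x /\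
            forall k : nat, alpha ((k.+1%:R)^-1) = u k.

Lemma based_seq {X : topologicalType} {x : X} {f U} : based_map H0 0%R x f -> nbhs x U ->
  exists2 e : R, 0 < e & forall b, H0 b -> `|b| < e -> U (f b).
Proof.
move=> [/withinP cf f0] hU; rewrite -f0 in hU.
have [e e0 He] := cf 0%R (or_introl erefl) U hU.
exists e => // b Hb hb; apply: He => //; apply/ballR; by rewrite IZR0 sub0r normrN.
Qed.

Lemma p5_p1 (X : topologicalType) (x : X) : P5 x -> seq_0_connected x.
Proof.
move=> h5 f g bf bg.
set v := fun j : nat => if odd j then g ((j./2).+1%:R^-1) else f ((j./2).+1%:R^-1).
have hv : v @ \oo --> x.
  move=> U hU.
  have [ef ef0 Hf] := based_seq bf hU.
  have [eg eg0 Hg] := based_seq bg hU.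
  have e0 : 0 < Order.min ef eg by rewrite lt_min ef0 eg0.
  have [N _ HN] := near_infty_natSinv_lt (PosNum e0).
  exists N.*2 => // j /= hj.
  have hN : (N <= j./2)%nat by rewrite geq_half_double.
  have := HN _ hN; rewrite /= lt_min => /andP [h1 h2].
  have Hj : H0 ((j./2).+1%:R^-1) by right; exists j./2.
  have hj' : forall e : R, (j./2).+1%:R^-1 < e -> `|(j./2).+1%:R^-1 : R| < e.
    by move=> e he; rewrite ger0_norm // invr_ge0 ler0n.
  rewrite /v; case: (odd j).
    by apply: Hg => //; apply: hj'.
  by apply: Hf => //; apply: hj'.
have [a [ca [a0 ak]]] := h5 v hv.
case: bf => cf f0; case: bg => cg g0.
exists (a \o phi); split.
  apply: (within_comp _ _ ca).
    apply: continuous_in_subspaceT => q /set_mem [_ Hq]; apply: phi_cont.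
    by apply/negP => /eqP q2; move: (H0_I Hq); rewrite q2 => /andP [_]; lra.
  by move=> [t s] [/= It Hs]; apply: phi_I => //; exact: H0_I.
split.
  move=> s [->|[k ->]] /=.
    by rewrite !phi_s0 a0 f0 g0.
  rewrite phi_0k phi_1k -[(k.*2).+2]/((k.*2).+1.+1) !ak /v /=.
  by rewrite odd_double /= doubleK uphalf_double.
by move=> t It /=; rewrite phi_s0 a0.
Qed.

Definition P4 {X : topologicalType} (x : X) := forall f : nat -> R -> X,
          (forall k, {within S0, continuous (f k)}) ->
          maps_converge_to S0 f x -> seq_null_homotopic f x.

Lemma p4_p5 (X : topologicalType) (x : X) : P4 x -> P5 x.
Proof.
move=> h4 u hu.
have := h4 (fun k _ => u k).
case.
- by move=> k; apply: continuous_subspaceT; exact: cst_continuous.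
- move=> U hU; have [N _ HN] := hu U hU; exists N => // k /= hk y [s _ <-]; exact: HN.
move=> H [Hc [Hb Hconv]].
set p := fun k t => H k (t, (-1)%R).
have S0m1 : S0 (-1)%R by left.
have pc : forall k, {within unitI, continuous (p k)}.
  by move=> k; apply: (slice_cont (H k) S0 (-1)%R S0m1 (Hc k)).
have p1 : forall k, p k 1%R = x by move=> k; rewrite /p (Hb k _ S0m1).2.
have p0 : forall k, p k 0%R = u k by move=> k; rewrite /p (Hb k _ S0m1).1.
have hconv : forall U, nbhs x U -> \forall k \near \oo, forall t, unitI t -> U (p k t).
  move=> U hU; move: (Hconv U hU); apply: filterS => k hk t It; apply: (hk (p k t)).
  by exists (t, (-1)%R).
exists (alph X x p); split; first exact: (@alph_cont X x p pc p1 hconv).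
split; first exact: alph0.
by move=> k; rewrite alphk p0.
Qed.

Lemma ltm1 : (0 < (-1)%R :> R) = false.
Proof. by rewrite IZRm1; apply/negbTE; rewrite -leNgt; lra. Qed.
Lemma lt1 : (0 < 1%R :> R) = true.
Proof. by rewrite IZR1 ltr01. Qed.

Lemma cst_based (X : topologicalType) (x : X) : based_map H0 0%R x (fun _ => x).
Proof. by split => //; apply: continuous_subspaceT; exact: cst_continuous. Qed.

Lemma p1_p4 (X : topologicalType) (x : X) : seq_0_connected x -> P4 x.
Proof.
move=> h1 f fc fconv.
have hv : forall s, S0 s -> (fun k => f k s) @ \oo --> x.
  move=> s Ss U hU; have [N _ HN] := fconv U hU; exists N => // k /= hk.
  by apply: (HN k hk); exists s.
have [HF [cF [bF xF]]] := h1 _ _ (hseq_cont (hv _ (or_introl erefl))) (cst_based X x).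
have [HG [cG [bG xG]]] := h1 _ _ (hseq_cont (hv _ (or_intror erefl))) (cst_based X x).
pose Hk k (q : R * R) := if 0 < q.2 then HG (q.1, (k.+1%:R)^-1) else HF (q.1, (k.+1%:R)^-1).
have Hk0 : forall k, H0 ((k.+1%:R)^-1) by move=> k; right; exists k.
exists Hk; split.
  move=> k; exact: (cont_S0 _ _ (slice_cont HG H0 _ (Hk0 k) cG) (slice_cont HF H0 _ (Hk0 k) cF)).
split.
  move=> k s [->|->]; rewrite /Hk /= ?ltm1 ?lt1.
    by rewrite (bF _ (Hk0 k)).1 (bF _ (Hk0 k)).2 hseqk.
  by rewrite (bG _ (Hk0 k)).1 (bG _ (Hk0 k)).2 hseqk.
move=> U hU.
have tF := tube cF xF U hU.
have tG := tube cG xG U hU.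
have [N1 _ HN1] := tF; have [N2 _ HN2] := tG.
exists (maxn N1 N2) => // k /=; rewrite geq_max => /andP [k1 k2] y [[t s] [/= It Ss] <-].
by rewrite /Hk /=; case: (0 < s); [apply: HN2 | apply: HN1].
Qed.

Lemma p5_pc (X : topologicalType) (x : X) : P5 x -> path_connected X.
Proof.
move=> h5 y z.
pose u k : X := if k == 0%nat then y else if k == 1%nat then z else x.
have hu : u @ \oo --> x.
  move=> U hU; exists 2%nat => // k /= hk; rewrite /u.
  case: k hk => [|[|k]] //= _; exact: nbhs_singleton.
have [a [ca [a0 ak]]] := h5 u hu.
pose g (t : R) : R := (1 - t / 2)%ring.
have gc : {within unitI, continuous g}.
  apply/withinP => t It U hU; have [e e0 He] := (nbhs_ballP _ _).1 hU.
  exists e => // t' It' /ballR h; apply: He; apply/ballR; rewrite /g.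
  move: h; rewrite !ltr_norml => /andP [h1 h2]; apply/andP; split; lra.
have gI : forall t, unitI t -> unitI (g t).
  by move=> t /unitIP /andP [t0 t1]; apply/unitIP; rewrite /g; apply/andP; split; lra.
exists (a \o g); split; first exact: (within_comp _ gI ca).
split.
  rewrite /= /g IZR0 mul0r subr0.
  by have := ak 0%nat; rewrite invr1.
rewrite /= /g IZR1.
have -> : 1 - 1 / 2 = (1.+1%:R)^-1 :> R by lra.
by rewrite ak.
Qed.

Lemma ell_m1 m : ell m.+1 (-1)%R = 0.
Proof. by rewrite /ell IZRm1 addNr mul0r. Qed.

Lemma ell_1 m : ell m.+1 1%R = (m.+1%:R)^-1.
Proof.
rewrite /ell IZR1 -natr1.
have m0 : 0 <= (m%:R : R) by exact: ler0n.
field; apply/lt0r_neq0; lra.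
Qed.

Lemma p3_p1 (X : topologicalType) (x : X) :
  path_connected X /\ pi0_residual x -> seq_0_connected x.
Proof.
move=> [pc res] f g bf bg; apply: res => // m.
have [gam [gc [g0 g1]]] := pc (f ((m.+1%:R)^-1)) (g ((m.+1%:R)^-1)).
case: bf => _ f0; case: bg => _ gg0.
exists (fun q : R * R => if 0 < q.2 then gam q.1 else x); split.
  apply: (cont_S0 _ _ gc); apply: continuous_subspaceT; exact: cst_continuous.
split.
  move=> s [->|->] /=; rewrite ?ltm1 ?lt1 ?ell_m1 ?ell_1 ?g0 ?g1 //.
by move=> t It /=; rewrite ltm1.
Qed.

Lemma p1_tame (X : topologicalType) (x : X) : seq_0_connected x -> tame0 x.
Proof.
move=> h1; split; first by move=> f g bf bg _; exact: h1.
move=> f bf; exists 0%nat => m _.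
have [H [cH [bH xH]]] := h1 _ _ bf (cst_based X x).
have ellH0 : forall s, S0 s -> H0 (ell m.+1 s).
  move=> s [->|->]; [left; rewrite ell_m1 IZR0 // | right; exists m; exact: ell_1].
exists (fun q : R * R => H (q.1, ell m.+1 q.2)); split.
  pose G (q : R * R) := (q.1, ell m.+1 q.2).
  have Gc : {within unitI `*` S0, continuous G}.
    apply/withinP => -[t s] [/= It Ss] U hU.
    have [e e0 He] := (nbhs_ballP _ _).1 hU.
    exists (Order.min e 1); first by rewrite lt_min e0 ltr01.
    move=> [t' s'] [/= It' Ss'] /ballRR [/= h1' h2'].
    move: h1' h2'; rewrite !lt_min => /andP [h3 _] /andP [_ h4].
    rewrite (S0_iso Ss Ss' h4); apply: He; apply/ballRR => /=; split; first exact/ballR.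
    by rewrite subrr normr0.
  have GI : forall q, (unitI `*` S0) q -> (unitI `*` H0) (G q).
    by move=> [t s] [/= It Ss]; split => //=; exact: ellH0.
  exact: (within_comp Gc GI cH).
split.
  by move=> s Ss /=; rewrite (bH _ (ellH0 _ Ss)).1 (bH _ (ellH0 _ Ss)).2.
by move=> t It /=; rewrite ell_m1 -IZR0 xH.
Qed.

Theorem lemma2p21 (X : topologicalType) (hX : hausdorff_space X) (x : X) :
  [<-> seq_0_connected x;
       path_connected X /\ tame0 x;
       path_connected X /\ pi0_residual x;
       (forall f : nat -> R -> X,
          (forall k, {within S0, continuous (f k)}) ->
          maps_converge_to S0 f x -> seq_null_homotopic f x);
       (forall u : nat -> X, u @ \oo --> x ->
          exists alpha : R -> X,
            {within unitI, continuous alpha} /\ alpha 0%R = x /\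
            forall k : nat, alpha ((k.+1%:R)^-1) = u k)].
Proof.
tfae.
- move=> h1; split; last exact: p1_tame.
  exact: (@p5_pc X x (@p4_p5 X x (@p1_p4 X x h1))).
- by move=> [pc [res _]].
- by move=> h3; apply: (@p1_p4 X x); exact: (@p3_p1 X x h3).
- exact: (@p4_p5 X x).
- exact: (@p5_p1 X x).
Qed.
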